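(* Let $r,k,s$ be integers with $k+r\neq 0$ and $k+s\neq 0$, and let $n\ge 0$ be an integer. Then \[ 2\sum_{j=0}^{n}(-1)^{(k+s)j}L_{r-s}^{j}L_{2k+r+s}^{n-j}=\sum_{j=0}^{n}\left(\frac{L_{k+r}L_{k+s}}{2}\right)^j\left(L_{2k+r+s}^{n-j}+(-1)^{(k+s)(n-j)}L_{r-s}^{n-j}\right)=2\,\frac{L_{2k+r+s}^{n+1}-(-1)^{(k+s)(n+1)}L_{r-s}^{n+1}}{5F_{k+r}F_{k+s}}. \]
   Context: $F_n$ and $L_n$ denote the Fibonacci and Lucas numbers, defined for all integers $n$ by $F_0=0,F_1=1$, $L_0=2,L_1=1$ and $x_n=x_{n-1}+x_{n-2}$; equivalently $F_n=(\alpha^n-\beta^n)/(\alpha-\beta)$, $L_n=\alpha^n+\beta^n$ with $\alpha=(1+\sqrt5)/2$, $\beta=(1-\sqrt5)/2$. In particular $F_{-n}=(-1)^{n-1}F_n$ and $L_{-n}=(-1)^nL_n$. *)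

(* Defs.v *)
From mathcomp Require Import all_boot all_order all_algebra.
Set Implicit Arguments. Unset Strict Implicit. Unset Printing Implicit Defensive.
Import Order.TTheory GRing.Theory Num.Theory.
Local Open Scope ring_scope.

Fixpoint fibn (n : nat) : int :=
  match n with
  | 0%N => 0
  | 1%N as m => 1
  | (m.+1 as p).+1 => fibn p + fibn m
  end.

Fixpoint lucn (n : nat) : int :=
  match n with
  | 0%N => 2
  | 1%N => 1
  | (m.+1 as p).+1 => lucn p + lucn m
  end.

(* F_{-n} = (-1)^{n-1} F_n, L_{-n} = (-1)^n L_n *)
Definition Fib (z : int) : int :=
  match z with
  | Posz n => fibn n
  | Negz m => (-1) ^+ m * fibn m.+1     (* z = -(m+1) *)
  end.

Definition Luc (z : int) : int :=
  match z with
  | Posz n => lucn n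
  | Negz m => (-1) ^+ m.+1 * lucn m.+1
  end.

(* Main.v *)
Require Import Defs.
From mathcomp Require Import all_boot all_order all_algebra.
From mathcomp Require Import ring zify.
Import Order.TTheory GRing.Theory Num.Theory.
Local Open Scope ring_scope.

Definition ee (z : int) : rat := (-1 : rat) ^ z.
Definition ll (z : int) : rat := (Luc z)%:~R.
Definition ff (z : int) : rat := (Fib z)%:~R.

Lemma m1nz : (-1 : rat) != 0. Proof. by rewrite oppr_eq0 oner_eq0. Qed.

Lemma eeD a b : ee (a + b) = ee a * ee b.
Proof. by rewrite /ee expfzDr // m1nz. Qed.

Lemma ee1 : ee 1 = -1. Proof. by []. Qed.

Lemma eesq z : ee z * ee z = 1.
Proof.
case: z => [n|n]; rewrite /ee ?NegzE -?exprnN -?exprVn ?invrN1 -?exprnP;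
  by rewrite -exprMn mulrNN mulr1 expr1n.
Qed.

Lemma eeN z : ee (- z) = ee z.
Proof.
have h := eesq z; have : ee (- z) * ee z = 1 by rewrite -eeD addNr.
by move=> h2; rewrite -[ee (-z)]mulr1 -h mulrA h2 mul1r.
Qed.

Lemma eenat (n : nat) : ee n = (-1) ^+ n. Proof. by []. Qed.

Lemma ll_negn (n : nat) : ll (- n%:Z) = (-1) ^+ n * ll n.
Proof.
case: n => [|m]; first by rewrite /= mul1r.
by rewrite (_ : - (m.+1)%:Z = Negz m) // /ll /= rmorphM /= rmorphXn /= rmorphN1.
Qed.

Lemma ff_negn (n : nat) : ff (- n%:Z) = - (-1) ^+ n * ff n.
Proof.
case: n => [|m]; first by rewrite /ff /= mulr0.
rewrite (_ : - (m.+1)%:Z = Negz m) // /ff /= rmorphM /= rmorphXn /= rmorphN1 exprS; ring.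
Qed.

Lemma ll_neg z : ll (- z) = ee z * ll z.
Proof.
case: z => [n|m]; first by rewrite ll_negn.
rewrite NegzE opprK ll_negn -eenat -(eeN m.+1) mulrA eesq mul1r //.
Qed.

Lemma ff_neg z : ff (- z) = - ee z * ff z.
Proof.
case: z => [n|m]; first by rewrite ff_negn.
by rewrite NegzE opprK ff_negn -eenat -(eeN m.+1) mulrA mulrNN eesq mul1r.
Qed.

Lemma ll_recn (n : nat) : ll (n.+2) = ll n.+1 + ll n.
Proof. by rewrite /ll /= rmorphD. Qed.
Lemma ff_recn (n : nat) : ff (n.+2) = ff n.+1 + ff n.
Proof. by rewrite /ff; case: n => [|n] //=; rewrite rmorphD. Qed.

Lemma ll_rec z : ll (z + 2) = ll (z + 1) + ll z.
Proof.
case: z => [n|[|p]].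
- have -> : (n%:Z + 2 = n.+2) by lia.
  have -> : (n%:Z + 1 = n.+1) by lia.
  exact: ll_recn.
- by rewrite /ll /=.
- have -> : Negz p.+1 + 2 = - p%:Z by rewrite NegzE; lia.
  have -> : Negz p.+1 + 1 = - p.+1%:Z by rewrite NegzE; lia.
  rewrite NegzE !ll_negn ll_recn !exprS; ring.
Qed.

Lemma ff_rec z : ff (z + 2) = ff (z + 1) + ff z.
Proof.
case: z => [n|[|p]].
- have -> : (n%:Z + 2 = n.+2) by lia.
  have -> : (n%:Z + 1 = n.+1) by lia.
  exact: ff_recn.
- by rewrite /ff /=.
- have -> : Negz p.+1 + 2 = - p%:Z by rewrite NegzE; lia.
  have -> : Negz p.+1 + 1 = - p.+1%:Z by rewrite NegzE; lia.
  rewrite NegzE !ff_negn ff_recn !exprS; ring.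
Qed.

Lemma rec_uniq (f g : int -> rat) :
  (forall z, f (z + 2) = f (z + 1) + f z) ->
  (forall z, g (z + 2) = g (z + 1) + g z) ->
  f 0 = g 0 -> f 1 = g 1 -> forall z, f z = g z.
Proof.
move=> hf hg h0 h1.
have pos : forall n : nat, f n%:Z = g n%:Z /\ f (n%:Z + 1) = g (n%:Z + 1).
  elim=> [|n [IH1 IH2]]; first by split.
  split.
    transitivity (f (n%:Z + 1)); first by congr f; lia.
    by rewrite IH2; congr g; lia.
  transitivity (f (n%:Z + 2)); first by congr f; lia.
  by rewrite hf IH1 IH2 -hg; congr g; lia.
have neg : forall n : nat, f (- n%:Z) = g (- n%:Z) /\ f (- n%:Z + 1) = g (- n%:Z + 1).
  elim=> [|n [IH1 IH2]]; first by split.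
  have e1 : - n.+1%:Z + 1 = - n%:Z by lia.
  rewrite e1; split=> //.
  have hf' := hf (- n.+1%:Z); have hg' := hg (- n.+1%:Z).
  have e2 : - n.+1%:Z + 2 = - n%:Z + 1 by lia.
  rewrite e2 e1 in hf' hg'.
  have -> : f (- n.+1%:Z) = f (- n%:Z + 1) - f (- n%:Z) by rewrite hf'; ring.
  have -> : g (- n.+1%:Z) = g (- n%:Z + 1) - g (- n%:Z) by rewrite hg'; ring.
  by rewrite IH1 IH2.
case=> [n|m]; first by case: (pos n).
by rewrite NegzE; case: (neg m.+1).
Qed.

Lemma ll0 : ll 0 = 2. Proof. by []. Qed.
Lemma ll1 : ll 1 = 1. Proof. by []. Qed.
Lemma ff0 : ff 0 = 0. Proof. by []. Qed.
Lemma ff1 : ff 1 = 1. Proof. by []. Qed.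

Lemma ll_pred n : ll (n + 1) = ll n + ll (n - 1).
Proof. by have := ll_rec (n - 1); rewrite (_ : n - 1 + 2 = n + 1) ?subrK //; ring. Qed.

Lemma LL m n : ll m * ll n = ll (m + n) + ee n * ll (m - n).
Proof.
pose G m := ll (m + n) + ee n * ll (m - n).
rewrite -/(G m); move: m; apply: (rec_uniq (fun m => ll m * ll n) G).
- by move=> z; rewrite ll_rec; ring.
- move=> z; rewrite /G.
  rewrite (_ : z + 2 + n = (z + n) + 2); last by ring.
  rewrite (_ : z + 1 + n = (z + n) + 1); last by ring.
  rewrite (_ : z + 2 - n = (z - n) + 2); last by ring.
  rewrite (_ : z + 1 - n = (z - n) + 1); last by ring.
  rewrite !ll_rec; ring.
- by rewrite /G add0r sub0r ll_neg mulrA eesq ll0; ring.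
- rewrite /G ll1 (_ : 1 - n = - (n - 1)); last by ring.
  rewrite ll_neg.
  rewrite eeD (_ : ee (-1) = -1); last by rewrite eeN.
  rewrite (_ : 1 + n = (n - 1) + 2); last by ring.
  rewrite ll_rec (_ : n - 1 + 1 = n); last by ring.
  rewrite (_ : ee n * (ee n * -1 * ll (n + -1)) = - (ee n * ee n) * ll (n + -1)); last by ring.
  by rewrite eesq; ring.
Qed.

Lemma F5 n : 5 * ff n = ll (n + 1) + ll (n - 1).
Proof.
move: n; apply: (rec_uniq (fun n => 5 * ff n) (fun n => ll (n + 1) + ll (n - 1))).
- by move=> z; rewrite ff_rec; ring.
- move=> z.
  rewrite (_ : z + 2 + 1 = (z + 1) + 2); last by ring.
  rewrite (_ : z + 2 - 1 = (z - 1) + 2); last by ring.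
  rewrite (_ : z + 1 - 1 = (z - 1) + 1); last by ring.
  rewrite !ll_rec (_ : z - 1 + 1 = z); last by ring.
  rewrite (_ : z + 1 + 1 = z + 2); last by ring.
  rewrite ll_rec; ring.
- by rewrite ff0 add0r sub0r ll_neg ll1 /ee /=; ring.
- by rewrite ff1 subrr ll0 (_ : 1 + 1 = 0 + 2) // ll_rec ll0 ll1; ring.
Qed.

Lemma FF m n : 5 * ff m * ff n = ll (m + n) - ee n * ll (m - n).
Proof.
pose G m := ll (m + n) - ee n * ll (m - n).
rewrite -/(G m); move: m; apply: (rec_uniq (fun m => 5 * ff m * ff n) G).
- by move=> z; rewrite ff_rec; ring.
- move=> z; rewrite /G.
  rewrite (_ : z + 2 + n = (z + n) + 2); last by ring.
  rewrite (_ : z + 1 + n = (z + n) + 1); last by ring.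
  rewrite (_ : z + 2 - n = (z - n) + 2); last by ring.
  rewrite (_ : z + 1 - n = (z - n) + 1); last by ring.
  rewrite !ll_rec; ring.
- by rewrite /G ff0 add0r sub0r ll_neg mulrA eesq; ring.
- rewrite /G ff1 mulr1 F5 (_ : 1 - n = - (n - 1)); last by ring.
  rewrite ll_neg eeD (_ : ee (-1) = -1); last by rewrite eeN.
  rewrite (_ : 1 + n = n + 1); last by ring.
  rewrite (_ : ee n * (ee n * -1 * ll (n + -1)) = - (ee n * ee n) * ll (n + -1)); last by ring.
  by rewrite eesq; ring.
Qed.

Lemma fibn_gt0 n : (0 < fibn n.+1)%R.
Proof.
suff : (0 < fibn n.+1)%R /\ (0 < fibn n.+2)%R by case.
elim: n => [|n [h1 h2]]; first by [].
split=> //; rewrite /= -/(fibn n.+2) -/(fibn n.+1); exact: addr_gt0.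
Qed.

Lemma ff_neq0 z : z != 0 -> ff z != 0.
Proof.
have hp : forall n : nat, ff n.+1 != 0.
  by move=> n; rewrite /ff intr_eq0 gt_eqF // fibn_gt0.
case: z => [[|n]|m] //= _.
rewrite (_ : Negz m = - (m.+1%:Z)) ?ff_neg; last by rewrite NegzE.
rewrite mulf_eq0 negb_or hp andbT oppr_eq0.
by apply/eqP=> h; have := eesq m.+1; rewrite h mul0r => /eqP; rewrite eq_sym oner_eq0.
Qed.



Lemma hclosed (a b : rat) n :
  (a - b) * \sum_(0 <= j < n.+1) b ^+ j * a ^+ (n - j) = a ^+ n.+1 - b ^+ n.+1.
Proof.
rewrite subrXX big_mkord; congr (_ * _); apply: eq_bigr => i _; rewrite mulrC //.
Qed.

Lemma Srec (a b c : rat) n :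
  \sum_(0 <= j < n.+2) c ^+ j * (a ^+ (n.+1 - j) + b ^+ (n.+1 - j))
  = a ^+ n.+1 + b ^+ n.+1
    + c * \sum_(0 <= j < n.+1) c ^+ j * (a ^+ (n - j) + b ^+ (n - j)).
Proof.
rewrite big_nat_recl // subn0 expr0 mul1r; congr (_ + _).
rewrite mulr_sumr; apply: eq_bigr => j _; rewrite subSS exprS mulrA //.
Qed.

Lemma core (a b c : rat) n : a != b -> 2 * c = a + b ->
  (2 * \sum_(0 <= j < n.+1) b ^+ j * a ^+ (n - j)
   = \sum_(0 <= j < n.+1) c ^+ j * (a ^+ (n - j) + b ^+ (n - j)))
  /\ (\sum_(0 <= j < n.+1) c ^+ j * (a ^+ (n - j) + b ^+ (n - j))
   = 2 * (a ^+ n.+1 - b ^+ n.+1) / (a - b)).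
Proof.
move=> hab hc.
have hab' : a - b != 0 by rewrite subr_eq0.
have S : forall n, \sum_(0 <= j < n.+1) c ^+ j * (a ^+ (n - j) + b ^+ (n - j))
   = 2 * (a ^+ n.+1 - b ^+ n.+1) / (a - b).
  elim=> [|m IH].
    rewrite big_nat1 !expr0 !expr1 mul1r; field; exact: hab'.
  rewrite Srec IH.
  have -> : c = (a + b) / 2 by rewrite -hc; field.
  rewrite !(exprS a (m.+1)) !(exprS b (m.+1)); field; exact: hab'.
split; last exact: S.
rewrite S; apply: (mulIf hab'); rewrite mulrAC -mulrA hclosed; field; exact: hab'.
Qed.

Lemma eeMn z (j : nat) : ee (z * j%:Z) = ee z ^+ j.
Proof. by rewrite /ee -exprz_exp -exprnP. Qed.

Theorem theorem8 (r k s : int) (n : nat) (hkr : k + r != 0) (hks : k + s != 0) :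
  let L := fun z : int => (Luc z)%:~R : rat in
  let F := fun z : int => (Fib z)%:~R : rat in
  let sgn := fun e : int => (-1 : rat) ^ e in
  (2 * \sum_(0 <= j < n.+1) sgn ((k + s) * j%:Z) * L (r - s) ^+ j * L (2 * k + r + s) ^+ (n - j)
   = \sum_(0 <= j < n.+1) (L (k + r) * L (k + s) / 2) ^+ j
        * (L (2 * k + r + s) ^+ (n - j) + sgn ((k + s) * (n - j)%N%:Z) * L (r - s) ^+ (n - j)))
  /\
  (\sum_(0 <= j < n.+1) (L (k + r) * L (k + s) / 2) ^+ j
        * (L (2 * k + r + s) ^+ (n - j) + sgn ((k + s) * (n - j)%N%:Z) * L (r - s) ^+ (n - j))
   = 2 * (L (2 * k + r + s) ^+ n.+1 - sgn ((k + s) * n.+1%:Z) * L (r - s) ^+ n.+1)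
       / (5 * F (k + r) * F (k + s))).
Proof.
move=> L F sgn.
have -> : L = ll by [].
have -> : F = ff by [].
have -> : sgn = ee by [].
have hsum : (k + r) + (k + s) = 2 * k + r + s by ring.
have hdif : (k + r) - (k + s) = r - s by ring.
have h5 := FF (k + r) (k + s); rewrite hsum hdif in h5.
have hl := LL (k + r) (k + s); rewrite hsum hdif in hl.
set a := ll (2 * k + r + s) in h5 hl *.
set b := ee (k + s) * ll (r - s) in h5 hl.
set c := ll (k + r) * ll (k + s) / 2.
have hab : a != b.
  rewrite -subr_eq0 -h5 !mulf_neq0 ?ff_neq0 //.
have hc : 2 * c = a + b by rewrite /c hl; field.
have e1 : \sum_(0 <= j < n.+1) ee ((k + s) * j%:Z) * ll (r - s) ^+ j * a ^+ (n - j)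
        = \sum_(0 <= j < n.+1) b ^+ j * a ^+ (n - j).
  by apply: eq_bigr => j _; rewrite eeMn -exprMn.
have e2 : \sum_(0 <= j < n.+1) c ^+ j * (a ^+ (n - j) + ee ((k + s) * (n - j)%N%:Z) * ll (r - s) ^+ (n - j))
        = \sum_(0 <= j < n.+1) c ^+ j * (a ^+ (n - j) + b ^+ (n - j)).
  by apply: eq_bigr => j _; rewrite eeMn -exprMn.
rewrite e1 e2 eeMn -exprMn -/b h5.
exact: core.
Qed.
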